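(* For all ProbNetKAT programs $p,q$: $[\![p]\!] = [\![q]\!]$ (as maps $2^{\mathsf{Pk}}\to\mathcal{D}(2^{\mathsf{Pk}})$) if and only if $\mathcal{B}[\![p]\!] = \mathcal{B}[\![q]\!]$.
   Context: Fix finitely many fields $f_1,\dots,f_k$, each ranging over a finite set of natural numbers. A packet $\pi$ is a record assigning a value to each field; $\pi.f$ is the value of field $f$ and $\pi[f:=n]$ is $\pi$ with field $f$ updated to $n$. $\mathsf{Pk}$ is the finite set of all packets. Syntax. Predicates: $t ::= \mathsf{false} \mid \mathsf{true} \mid f=n \mid t \,\&\, u \mid t ; u \mid \neg t$. Programs: $p ::= t \mid f \leftarrow n \mid p \,\&\, q \mid p ; q \mid p \oplus_r q \mid p^*$ (union, sequencing, probabilistic choice with rational $r\in[0,1]$, iteration). $p^{(0)} := \mathsf{true}$, $p^{(n+1)} := \mathsf{true} \,\&\, (p ; p^{(n)})$. Matrix semantics $\mathcal{B}[\![p]\!]\in[0,1]^{2^{\mathsf{Pk}}\times 2^{\mathsf{Pk}}}$ ($[\varphi]$ = Iverson bracket): $\mathcal{B}[\![\mathsf{false}]\!]_{ab}=[b=\emptyset]$; $\mathcal{B}[\![\mathsf{true}]\!]_{ab}=[a=b]$; $\mathcal{B}[\![f=n]\!]_{ab}=[b=\{\pi\in a:\pi.f=n\}]$; $\mathcal{B}[\![\neg t]\!]_{ab}=[b\subseteq a]\,\mathcal{B}[\![t]\!]_{a,a-b}$; $\mathcal{B}[\![f\leftarrow n]\!]_{ab}=[b=\{\pi[f:=n]:\pi\in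 a\}]$; $\mathcal{B}[\![p\,\&\,q]\!]_{ab}=\sum_{c,d}[c\cup d=b]\,\mathcal{B}[\![p]\!]_{ac}\mathcal{B}[\![q]\!]_{ad}$; $\mathcal{B}[\![p;q]\!]=\mathcal{B}[\![p]\!]\mathcal{B}[\![q]\!]$; $\mathcal{B}[\![p\oplus_r q]\!]=r\mathcal{B}[\![p]\!]+(1-r)\mathcal{B}[\![q]\!]$; $\mathcal{B}[\![p^*]\!]_{ab}=\lim_n\mathcal{B}[\![p^{(n)}]\!]_{ab}$. Denotational semantics: $\mathcal{D}(X)$ = probability distributions on finite $X$; $\delta_x$ Dirac; $\mathcal{D}(g)(\mu)=\mu\circ g^{-1}$; $g^\dagger(\mu)(A)=\sum_x g(x)(A)\mu(x)$; $\mu\times\nu$ product. Order: $\mu\sqsubseteq\nu$ iff $\mu(\{b:a\subseteq b\})\le\nu(\{b:a\subseteq b\})$ for all $a$. $[\![\mathsf{false}]\!](a)=\delta_\emptyset$; $[\![\mathsf{true}]\!](a)=\delta_a$; $[\![f=n]\!](a)=\delta_{\{\pi\in a:\pi.f=n\}}$; $[\![f\leftarrow n]\!](a)=\delta_{\{\pi[f:=n]:\pi\in a\}}$; $[\![\neg t]\!](a)=\mathcal{D}(\lambda b.a-b)([\![t]\!](a))$; $[\![p\,\&\,q]\!](a)=\mathcal{D}(\cup)([\![p]\!](a)\times[\![q]\!](a))$; $[\![p;q]\!](a)=[\![q]\!]^\dagger([\![p]\!](a))$; $[\![p\oplus_r q]\!](a)=r[\![p]\!](a)+(1-r)[\![q]\!](a)$;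 $[\![p^*]\!](a)=\bigsqcup_n[\![p^{(n)}]\!](a)$ (supremum of a $\sqsubseteq$-increasing chain). *)

(* Defs.v *)
From HB Require Import structures.
From mathcomp Require Import all_boot all_order all_algebra.
From mathcomp Require Import boolp classical_sets filter reals topology normedtype.
Import numFieldNormedType.Exports.
Set Implicit Arguments. Unset Strict Implicit. Unset Printing Implicit Defensive.
Import Order.TTheory GRing.Theory Num.Theory.
Local Open Scope ring_scope.

Section ProbNetKAT.
Variable R : realType.
(* finitely many fields F; field f ranges over the finite set V f *)
Variable F : finType.
Variable V : F -> finType.

Local Notation Pk := {dffun forall f : F, V f}.

Definition upd (pi : Pk) (f : F) (n : V f) : Pk :=
  finfun (fun g : F => match f =P g with
                       | ReflectT e => ecast g (V g) e n
                       | ReflectF _ => pi g end).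
Arguments upd pi f n : clear implicits.

Inductive pred :=
| PFalse | PTrue | PTest (f : F) (n : V f)
| PAnd (t u : pred) | PSeq (t u : pred) | PNeg (t : pred).
Arguments PTest f n : clear implicits.

Definition prob := {r : rat | (0 <= r <= 1)%R}.

Inductive prog :=
| PPred (t : pred)
| PAssign (f : F) (n : V f)
| PUnion (p q : prog)
| PSeqP (p q : prog)
| PChoice (p q : prog) (r : prob)
| PStar (p : prog).
Arguments PAssign f n : clear implicits.

Definition rv (r : prob) : R := ratr (sval r).

Definition mx := {set Pk} -> {set Pk} -> R.

Definition detM (g : {set Pk} -> {set Pk}) : mx := fun a b => (b == g a)%:R.
Definition unionM (M N : mx) : mx := fun a b =>
  \sum_(c : {set Pk}) \sum_(d : {set Pk}) ((c :|: d) == b)%:R * M a c * N a d.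
Definition seqM (M N : mx) : mx := fun a b => \sum_(c : {set Pk}) M a c * N c b.
Definition chM (r : R) (M N : mx) : mx := fun a b => r * M a b + (1 - r) * N a b.
Definition negM (M : mx) : mx := fun a b => (b \subset a)%:R * M a (a :\: b).

Definition testSet (f : F) (n : V f) (a : {set Pk}) : {set Pk} :=
  [set pi in a | pi f == n].
Definition assignSet (f : F) (n : V f) (a : {set Pk}) : {set Pk} :=
  [set upd pi f n | pi in a].
Arguments testSet f n a : clear implicits.
Arguments assignSet f n a : clear implicits.

Fixpoint Bpred (t : pred) : mx :=
  match t with
  | PFalse => detM (fun _ => @finset.set0 _)
  | PTrue => detM id
  | PTest f n => detM (testSet f n)
  | PAnd t u => unionM (Bpred t) (Bpred u)
  | PSeq t u => seqM (Bpred t) (Bpred u)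
  | PNeg t => negM (Bpred t)
  end.

(* B[[p^(n)]] where p^(0) = true, p^(n+1) = true & (p ; p^(n)) *)
Definition Biter (M : mx) (n : nat) : mx :=
  iter n (fun N => unionM (detM id) (seqM M N)) (detM id).

Fixpoint B (p : prog) : mx :=
  match p with
  | PPred t => Bpred t
  | PAssign f n => detM (assignSet f n)
  | PUnion p q => unionM (B p) (B q)
  | PSeqP p q => seqM (B p) (B q)
  | PChoice p q r => chM (rv r) (B p) (B q)
  | PStar p => fun a b => limn (fun n => Biter (B p) n a b)
  end.

(* a distribution on the finite set 2^Pk is given by its mass function *)
Definition dist := {set Pk} -> R.
Definition is_dist (mu : dist) : Prop :=
  (forall b, 0 <= mu b) /\ \sum_(b : {set Pk}) mu b = 1.

Definition dirac (c : {set Pk}) : dist := fun b => (b == c)%:R.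
Definition pushD (g : {set Pk} -> {set Pk}) (mu : dist) : dist :=
  fun b => \sum_(c : {set Pk}) (g c == b)%:R * mu c.
Definition unionD (mu nu : dist) : dist := fun b =>
  \sum_(c : {set Pk}) \sum_(d : {set Pk}) ((c :|: d) == b)%:R * (mu c * nu d).
Definition bindD (k : {set Pk} -> dist) (mu : dist) : dist :=
  fun b => \sum_(c : {set Pk}) k c b * mu c.
Definition mixD (r : R) (mu nu : dist) : dist := fun b => r * mu b + (1 - r) * nu b.

Definition leD (mu nu : dist) : Prop :=
  forall a : {set Pk}, \sum_(b : {set Pk} | a \subset b) mu b <= \sum_(b : {set Pk} | a \subset b) nu b.

Definition is_lubD (c : nat -> dist) (m : dist) : Prop :=
  [/\ is_dist m, (forall n, leD (c n) m) &
      (forall m', is_dist m' -> (forall n, leD (c n) m') -> leD m m')].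

Definition supD (c : nat -> dist) : dist :=
  match pselect (exists m, is_lubD c m) with
  | left H => sval (cid H)
  | right _ => c 0%N
  end.

Definition Diter (K : {set Pk} -> dist) (n : nat) : {set Pk} -> dist :=
  iter n (fun D => fun a => unionD (dirac a) (bindD D (K a))) dirac.

Fixpoint denp (t : pred) : {set Pk} -> dist :=
  match t with
  | PFalse => fun _ => dirac (@finset.set0 _)
  | PTrue => dirac
  | PTest f n => fun a => dirac (testSet f n a)
  | PAnd t u => fun a => unionD (denp t a) (denp u a)
  | PSeq t u => fun a => bindD (denp u) (denp t a)
  | PNeg t => fun a => pushD (fun b => a :\: b) (denp t a)
  end.

Fixpoint den (p : prog) : {set Pk} -> dist :=
  match p with
  | PPred t => denp t
  | PAssign f n => fun a => dirac (assignSet f n a)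
  | PUnion p q => fun a => unionD (den p a) (den q a)
  | PSeqP p q => fun a => bindD (den q) (den p a)
  | PChoice p q r => fun a => mixD (rv r) (den p a) (den q a)
  | PStar p => fun a => supD (fun n => Diter (den p) n a)
  end.

End ProbNetKAT.

(* Main.v *)
Require Import Defs.
From mathcomp Require Import all_boot all_order all_algebra.
From mathcomp Require Import boolp classical_sets filter reals topology normedtype sequences.
Import Order.TTheory GRing.Theory Num.Theory.
Import numFieldNormedType.Exports.
Local Open Scope ring_scope.
Set Implicit Arguments. Unset Strict Implicit. Unset Printing Implicit Defensive.

Section Proof.
Variable R : realType.
Variable F : finType.
Variable V : F -> finType.
Local Notation Pk := {dffun forall f : F, V f}.
Local Notation S := {set Pk}.
Local Notation dist := (dist R V).
Local Notation dirac := (@dirac R F V).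

Lemma sum_eq_cond (P : {pred S}) x (f : S -> R) :
  \sum_(b | P b) (x == b)%:R * f b = (P x)%:R * f x.
Proof.
rewrite big_mkcond (bigD1 x) //= eqxx mul1r big1 ?addr0.
  by case: (P x); rewrite ?mul1r ?mul0r.
by move=> b /negbTE; rewrite eq_sym => ->; case: (P b); rewrite ?mul0r.
Qed.

Lemma sum_eq (x : S) (f : S -> R) : \sum_b (x == b)%:R * f b = f x.
Proof. by rewrite (sum_eq_cond predT) mul1r. Qed.

Definition U (mu : dist) (a : S) : R := \sum_(b : S | a \subset b) mu b.

Lemma U_bind (k : S -> dist) mu a :
  U (bindD k mu) a = \sum_c mu c * U (k c) a.
Proof.
rewrite /U /bindD exchange_big /=; apply: eq_bigr => c _.
by rewrite mulrC mulr_suml.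
Qed.

Lemma U_union (mu nu : dist) a :
  U (unionD mu nu) a = \sum_c mu c * U nu (a :\: c).
Proof.
rewrite /U /unionD exchange_big /=; apply: eq_bigr => c _.
rewrite exchange_big /= mulr_sumr [RHS]big_mkcond /=.
apply: eq_bigr => d _.
rewrite (sum_eq_cond (fun b => a \subset b) (c :|: d) (fun _ => mu c * nu d)).
by rewrite -subDset; case: (_ \subset _); rewrite ?mul1r ?mul0r.
Qed.

Lemma U_dirac c a : U (dirac c) a = (a \subset c)%:R.
Proof.
rewrite /U /Defs.dirac.
under eq_bigr => b _ do rewrite eq_sym -(mulr1 (_%:R)).
by rewrite (sum_eq_cond (fun b => a \subset b) c (fun _ => 1)) mulr1.
Qed.

Lemma U_set0 (mu : dist) : U mu finset.set0 = \sum_b mu b.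
Proof. by rewrite /U; apply: eq_bigl => b; rewrite finset.sub0set. Qed.

Lemma dirac_dist c : is_dist (dirac c).
Proof.
split=> [b|]; first by rewrite /dirac ler0n.
by rewrite -U_set0 U_dirac finset.sub0set.
Qed.

Lemma bind_dist (k : S -> dist) mu :
  is_dist mu -> (forall c, is_dist (k c)) -> is_dist (bindD k mu).
Proof.
move=> [mu0 mu1] kd; split=> [b|].
  by apply: sumr_ge0 => c _; apply: mulr_ge0 => //; case: (kd c).
rewrite -U_set0 U_bind -mu1; apply: eq_bigr => c _.
by rewrite U_set0; case: (kd c) => _ ->; rewrite mulr1.
Qed.

Lemma union_dist (mu nu : dist) :
  is_dist mu -> is_dist nu -> is_dist (unionD mu nu).
Proof.
move=> [mu0 mu1] [nu0 nu1]; split=> [b|].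
  by apply: sumr_ge0 => c _; apply: sumr_ge0 => d _; apply: mulr_ge0 => //; apply: mulr_ge0.
rewrite -U_set0 U_union -mu1; apply: eq_bigr => c _.
by rewrite finset.set0D U_set0 nu1 mulr1.
Qed.


Lemma rv01 (r : prob) : 0 <= rv R r <= 1.
Proof.
case: r => x h; have /andP [h0 h1] := h; rewrite /rv /= ler0q h0 /=.
by rewrite -(ler_rat R) rmorph1 in h1.
Qed.

Lemma mix_dist (r : prob) (mu nu : dist) :
  is_dist mu -> is_dist nu -> is_dist (mixD (rv R r) mu nu).
Proof.
have /andP [r0 r1] := rv01 r; move=> [mu0 mu1] [nu0 nu1]; split=> [b|].
  by rewrite /mixD addr_ge0 // mulr_ge0 // subr_ge0.
by rewrite /mixD big_split /= -!mulr_sumr mu1 nu1 !mulr1 addrC subrK.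
Qed.

Lemma push_dist (g : S -> S) (mu : dist) : is_dist mu -> is_dist (pushD g mu).
Proof.
move=> [mu0 mu1]; split=> [b|].
  by apply: sumr_ge0 => c _; rewrite mulr_ge0.
rewrite /pushD exchange_big /= -[RHS]mu1; apply: eq_bigr => c _.
exact: (sum_eq (g c) (fun _ => mu c)).
Qed.

Lemma leD_bind (k k' : S -> dist) mu : (forall c, 0 <= mu c) ->
  (forall c, leD (k c) (k' c)) -> leD (bindD k mu) (bindD k' mu).
Proof.
move=> mu0 kk a; change (U (bindD k mu) a <= U (bindD k' mu) a).
rewrite !U_bind; apply: ler_sum => c _; apply: ler_wpM2l => //; exact: kk.
Qed.

Lemma leD_union (mu nu nu' : dist) : (forall c, 0 <= mu c) ->
  leD nu nu' -> leD (unionD mu nu) (unionD mu nu').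
Proof.
move=> mu0 nn a; change (U (unionD mu nu) a <= U (unionD mu nu') a).
rewrite !U_union; apply: ler_sum => c _; apply: ler_wpM2l => //; exact: nn.
Qed.

Lemma leD_base (nu : dist) a : is_dist nu -> leD (dirac a) (unionD (dirac a) nu).
Proof.
move=> [nu0 nu1] a'; change (U (dirac a) a' <= U (unionD (dirac a) nu) a').
rewrite U_dirac U_union /Defs.dirac (bigD1 a) //= eqxx mul1r big1 ?addr0;
  last by move=> c /negbTE ->; rewrite mul0r.
case: (boolP (a' \subset a)) => h.
  by move: h; rewrite -finset.setD_eq0 => /eqP ->; rewrite U_set0 nu1.
by apply: sumr_ge0 => b _; exact: nu0.
Qed.


Lemma U_rec (mu : dist) a : mu a = U mu a - \sum_(b : S | a \proper b) mu b.
Proof.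
rewrite /U (bigD1 a) //=.
have -> : \sum_(i : S | (a \subset i) && (i != a)) mu i = \sum_(b : S | a \proper b) mu b.
  by apply: eq_bigl => b; rewrite finset.properEneq andbC eq_sym.
by rewrite addrK.
Qed.

Lemma set_ind (P : S -> Prop) :
  (forall a : S, (forall b : S, a \proper b -> P b) -> P a) -> forall a, P a.
Proof.
move=> H a.
suff K: forall n (a : S), (#|~: a| < n)%N -> P a by exact: (K _ a (ltnSn _)).
elim=> [|n IH] a0 //= lt; apply: H => b ab; apply: IH.
rewrite -properC in ab; have h := proper_card ab.
by rewrite ltnS in lt; exact: leq_trans h lt.
Qed.

Lemma U_inj (mu nu : dist) : (forall a, U mu a = U nu a) -> mu = nu.
Proof.
move=> H; apply: funext => b; elim/set_ind: b => b IH.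
rewrite U_rec [RHS]U_rec H; congr (_ - _); apply: eq_bigr => c bc; exact: IH.
Qed.


Lemma sum_cvg (P : {pred S}) (f : S -> nat -> R) :
  (forall i, P i -> cvgn (f i)) ->
  ((fun n => \sum_(i | P i) f i n) @ \oo%classic --> \sum_(i | P i) limn (f i))%classic.
Proof.
move=> H; apply: cvg_big; first exact: add_continuous.
move=> i Pi; exact: H.
Qed.


Lemma chain_lub (c : nat -> dist) : (forall n, is_dist (c n)) ->
  (forall n, leD (c n) (c n.+1)) ->
  exists m, is_lubD c m /\ forall b, ((fun n => c n b) @ \oo%classic --> m b)%classic.
Proof.
move=> cd inc.
have Umono a : {homo (fun n => U (c n) a) : n m / (n <= m)%N >-> n <= m}.
  by apply/nondecreasing_seqP => n; exact: inc n a.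
have Ule1 n a : U (c n) a <= 1.
  case: (cd n) => c0 c1; rewrite -c1 /U [X in _ <= X](bigID (fun b : S => a \subset b)) /=.
  by rewrite lerDl; apply: sumr_ge0 => b _.
have Ucvg a : cvgn (fun n => U (c n) a).
  apply: nondecreasing_is_cvgn (Umono a) _; exists 1 => _ [n _ <-]; exact: Ule1.
have ccvg b : cvgn (fun n => c n b).
  elim/set_ind: b => b IH.
  have -> : (fun n => c n b) = (fun n => U (c n) b - \sum_(b' : S | b \proper b') c n b').
    by apply: funext => n; rewrite -U_rec.
  apply: is_cvgB; first exact: Ucvg.
  apply/cvg_ex; eexists; apply: sum_cvg.
  by move=> i bi; exact: IH.
pose m := fun b => limn (fun n => c n b).
have Um a : ((fun n => U (c n) a) @ \oo%classic --> U m a)%classic.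
  rewrite /U /m; apply: sum_cvg => i _; exact: ccvg.
have Ulim a : U m a = limn (fun n => U (c n) a).
  by rewrite (cvg_lim _ (Um a)).
exists m; split; last by move=> b; exact: ccvg.
split.
- split=> [b|].
    apply: limr_ge; first exact: ccvg.
    by apply: nearW => n; case: (cd n).
  rewrite -U_set0 Ulim.
  have -> : (fun n => U (c n) finset.set0) = (fun _ => 1).
    by apply: funext => n; rewrite U_set0; case: (cd n).
  exact: lim_cst.
- move=> n a; change (U (c n) a <= U m a); rewrite Ulim.
  exact: nondecreasing_cvgn_le (Umono a) (Ucvg a) n.
- move=> m' _ ub a; change (U m a <= U m' a); rewrite Ulim.
  apply: limr_le; first exact: Ucvg.
  by apply: nearW => n; exact: ub n a.
Qed.


Lemma supD_chain (c : nat -> dist) m : is_lubD c m -> supD c = m.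
Proof.
move=> [md mub ml]; rewrite /supD; case: pselect => [H|H]; last first.
  by exfalso; apply: H; exists m.
case: (cid H) => m' /= [m'd m'ub m'l].
apply: U_inj => a; apply: le_anti; apply/andP; split.
  exact: m'l m md mub a.
exact: ml m' m'd m'ub a.
Qed.

Lemma Diter_dist (K : S -> dist) : (forall a, is_dist (K a)) ->
  forall n a, is_dist (Diter K n a).
Proof.
move=> Kd; elim=> [|n IH] a; first exact: dirac_dist.
apply: union_dist; first exact: dirac_dist.
exact: bind_dist.
Qed.

Lemma Diter_mono (K : S -> dist) : (forall a, is_dist (K a)) ->
  forall n a, leD (Diter K n a) (Diter K n.+1 a).
Proof.
move=> Kd; elim=> [|n IH] a.
  apply: leD_base; apply: bind_dist => //; exact: dirac_dist.
apply: leD_union; first by move=> c; case: (dirac_dist a).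
apply: leD_bind => //; by case: (Kd a).
Qed.

Lemma Diter_Biter (M : mx R V) n : Diter M n = Biter M n.
Proof.
elim: n => [|n IH] //=.
rewrite /Diter /Biter /= -/(Diter M n) -/(Biter M n) IH.
apply: funext => a; apply: funext => b.
rewrite /unionD /unionM /bindD /seqM /detM /Defs.dirac /=.
apply: eq_bigr => c _; apply: eq_bigr => d _.
rewrite -mulrA; congr (_ * (_ * _)); apply: eq_bigr => e _; exact: mulrC.
Qed.

Lemma denp_supp (t : Defs.pred V) (a b : S) : ~~ (b \subset a) -> denp R t a b = 0.
Proof.
elim: t a b => [|| f n | t IHt u IHu | t IHt u IHu | t IHt] a b nb /=.
- rewrite /Defs.dirac; case: eqP => // e.
  by rewrite e finset.sub0set in nb.
- rewrite /Defs.dirac; case: eqP => // e.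
  by rewrite e fintype.subxx in nb.
- rewrite /Defs.dirac; case: eqP => // e.
  exfalso; move/negP: nb; apply; rewrite e.
  by apply/fintype.subsetP => x; rewrite inE => /andP [].
- rewrite /unionD; apply: big1 => c _; apply: big1 => d _.
  case: eqP => [e|]; last by rewrite mul0r.
  case: (boolP (c \subset a)) => ca; last by rewrite IHt // mul0r mulr0.
  case: (boolP (d \subset a)) => da; last by rewrite IHu // !mulr0.
  by exfalso; move/negP: nb; apply; rewrite -e finset.subUset ca da.
- rewrite /bindD; apply: big1 => c _.
  case: (boolP (c \subset a)) => ca; last by rewrite IHt // mulr0.
  rewrite IHu ?mul0r //; apply: contra nb => bc; exact: fintype.subset_trans bc ca.
- rewrite /pushD; apply: big1 => c _.
  case: eqP => [e|]; last by rewrite mul0r.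
  by exfalso; move/negP: nb; apply; rewrite -e finset.subsetDl.
Qed.

Lemma denp_dist (t : Defs.pred V) a : is_dist (denp R t a).
Proof.
elim: t a => [|| f n | t IHt u IHu | t IHt u IHu | t IHt] a /=;
  try exact: dirac_dist.
- exact: union_dist.
- exact: bind_dist.
- exact: push_dist.
Qed.

Lemma denp_B (t : Defs.pred V) : denp R t = Bpred R t.
Proof.
elim: t => [|| f n | t IHt u IHu | t IHt u IHu | t IHt] //=.
- rewrite -IHt -IHu; apply: funext => a; apply: funext => b.
  rewrite /unionD /unionM; apply: eq_bigr => c _; apply: eq_bigr => d _.
  by rewrite mulrA.
- rewrite -IHt -IHu; apply: funext => a; apply: funext => b.
  rewrite /bindD /seqM; apply: eq_bigr => c _; exact: mulrC.
- rewrite -IHt; apply: funext => a; apply: funext => b.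
  rewrite /pushD /negM.
  case: (boolP (b \subset a)) => ba.
    rewrite mul1r (bigD1 (a :\: b)) //= finset.setDDr finset.setDv finset.set0U.
    rewrite (finset.setIidPr ba) eqxx mul1r big1 ?addr0 // => c cne.
    case: eqP => [e|]; last by rewrite mul0r.
    case: (boolP (c \subset a)) => ca; last by rewrite denp_supp ?mulr0.
    exfalso; move/negP: cne; apply; apply/eqP.
    by rewrite -e finset.setDDr finset.setDv finset.set0U (finset.setIidPr ca).
  rewrite mul0r big1 // => c _; case: eqP => [e|]; last by rewrite mul0r.
  by exfalso; move/negP: ba; apply; rewrite -e finset.subsetDl.
Qed.

Lemma main (p : prog V) : (forall a, is_dist (den R p a)) /\ den R p = B R p.
Proof.
elim: p => [t | f n | p [Pd Pe] q [Qd Qe] | p [Pd Pe] q [Qd Qe]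
           | p [Pd Pe] q [Qd Qe] r | p [Pd Pe]] /=.
- by split; [exact: denp_dist | exact: denp_B].
- by split=> // a; exact: dirac_dist.
- split=> [a|]; first exact: union_dist.
  rewrite -Pe -Qe; apply: funext => a; apply: funext => b.
  rewrite /unionD /unionM; apply: eq_bigr => c _; apply: eq_bigr => d _.
  by rewrite mulrA.
- split=> [a|]; first exact: bind_dist.
  rewrite -Pe -Qe; apply: funext => a; apply: funext => b.
  rewrite /bindD /seqM; apply: eq_bigr => c _; exact: mulrC.
- split=> [a|]; first exact: mix_dist.
  by rewrite -Pe -Qe.
- have H a : exists m, is_lubD (fun n => Diter (den R p) n a) m /\
      forall b, ((fun n => Diter (den R p) n a b) @ \oo%classic --> m b)%classic.
    apply: chain_lub => n; [exact: Diter_dist | exact: Diter_mono].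
  split=> [a|].
    by case: (H a) => m [lm _]; rewrite (supD_chain lm); case: lm.
  apply: funext => a; apply: funext => b.
  case: (H a) => m [lm cm]; rewrite (supD_chain lm).
  rewrite -Pe; under eq_fun do rewrite -Diter_Biter.
  by rewrite (cvg_lim _ (cm b)).
Qed.

End Proof.

Theorem corollary3p2 (R : realType) (F : finType) (V : F -> finType)
    (p q : prog V) :
  den R p = den R q <-> B R p = B R q.
Proof. by rewrite (proj2 (main R p)) (proj2 (main R q)). Qed.
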